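(* Let $[X,A]$ be a Banach space with an $i$-operator such that $[X,A]\not\simeq[X,-A]$ and $[X,A]\simeq[X\oplus X,A\oplus A]$. Let $\mathfrak C$ consist of all complex operators $[T,A',B']:[U,A']\to[V,B']$ (between arbitrary Banach spaces with an $i$-operator) that factor over $[X,A]$, i.e. $T=RS$ for some bounded linear $S:U\to X$ and $R:X\to V$ with $SA'=AS$ and $RA=B'R$. Then $\mathfrak C$ is a complex operator ideal which is not self conjugate.
   Context: A Banach space with an $i$-operator is a pair $[X,A]$ with $X$ a real Banach space and $A:X\to X$ bounded linear with $A^2=-I_X$ and $\|\alpha x+\beta Ax\|=\|x\|$ whenever $\alpha^2+\beta^2=1$; these are exactly complex Banach spaces, and $[X,-A]$ is the complex conjugate space. A bounded linear $T:X\to Y$ with $TA=BT$ is a complex operator $[T,A,B]:[X,A]\to[Y,B]$; two such spaces are isomorphic ($\simeq$) if there is such a $T$ that is bijective. $A\oplus A$ is the $i$-operator $(x_1,x_2)\mapsto(Ax_1,Ax_2)$ on $X\oplus X$ (e.g. with norm $\|x_1\|+\|x_2\|$). A complex operator ideal (Pietsch) assigns to each pair of such spaces a linear subspace of complex operators between them, containing all finite rank complex operators and stable under composition on either side with bounded complex operators. It is self conjugate if $[T,A,B]\in\mathfrak C$ implies $[T,-A,-B]\in\mathfrak C$ and conversely, i.e. $\{[T,-A,-B]:[T,A,B]\in\mathfrak C\}=\mathfrak C$. *)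

(* Defs.v *)
(* Real Banach spaces = completeNormedModType R
   over an arbitrary R : realType. *)
From HB Require Import structures.
From mathcomp Require Import all_boot all_order all_algebra.
From mathcomp Require Import all_classical all_reals all_analysis.
Set Implicit Arguments. Unset Strict Implicit. Unset Printing Implicit Defensive.
Import Order.TTheory GRing.Theory Num.Theory.
Import numFieldNormedType.Exports.
Local Open Scope ring_scope.

Section Defs.
Variable R : realType.

Definition bounded_lin (U V : normedModType R) (f : U -> V) : Prop :=
  (forall (a : R) (x y : U), f (a *: x + y) = a *: f x + f y) /\ continuous f.

Definition is_iop (X : normedModType R) (A : X -> X) : Prop :=
  [/\ bounded_lin A, (forall x, A (A x) = - x) &
      (forall (a b : R) (x : X), a ^+ 2 + b ^+ 2 = 1 -> `|a *: x + b *: A x| = `|x|)].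

Definition opp_op (X : normedModType R) (A : X -> X) : X -> X := fun x => - A x.

Definition cplx_op (U V : normedModType R) (A : U -> U) (B : V -> V) (T : U -> V) : Prop :=
  bounded_lin T /\ forall x, T (A x) = B (T x).

Definition cplx_iso (U V : normedModType R) (A : U -> U) (B : V -> V) : Prop :=
  exists T : U -> V, cplx_op A B T /\ bijective T.

(* A (+) A on X (+) X (product space, with the max norm, equivalent to the sum norm) *)
Definition op_sum (X : normedModType R) (A : X -> X) : (X * X)%type -> (X * X)%type :=
  fun p => (A p.1, A p.2).

Definition finite_rank (U V : normedModType R) (T : U -> V) : Prop :=
  exists (n : nat) (v : 'I_n -> V),
    forall x, exists c : 'I_n -> R, T x = \sum_(i < n) c i *: v i.

Definition op_class :=
  forall (U V : completeNormedModType R), (U -> U) -> (V -> V) -> (U -> V) -> Prop.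

Definition is_cplx_op_ideal (C : op_class) : Prop :=
  (forall (U V : completeNormedModType R) (A : U -> U) (B : V -> V) (T : U -> V),
      C U V A B T -> [/\ is_iop A, is_iop B & cplx_op A B T]) /\
  (forall (U V : completeNormedModType R) (A : U -> U) (B : V -> V),
      is_iop A -> is_iop B ->
      [/\ C U V A B (fun _ => 0),
          (forall T1 T2, C U V A B T1 -> C U V A B T2 ->
                         C U V A B (fun x => T1 x + T2 x)) &
          (* multiplication by the complex scalar a + i b *)
          (forall (a b : R) T, C U V A B T ->
                         C U V A B (fun x => a *: T x + b *: B (T x)))]) /\
  (forall (U V : completeNormedModType R) (A : U -> U) (B : V -> V) (T : U -> V),
      is_iop A -> is_iop B -> cplx_op A B T -> finite_rank T -> C U V A B T) /\
  (forall (U0 U V V0 : completeNormedModType R) (A0 : U0 -> U0) (A : U -> U)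
          (B : V -> V) (B0 : V0 -> V0) (S : U0 -> U) (T : U -> V) (Q : V -> V0),
      is_iop A0 -> is_iop B0 -> cplx_op A0 A S -> C U V A B T -> cplx_op B B0 Q ->
      C U0 V0 A0 B0 (Q \o T \o S)).

Definition self_conjugate (C : op_class) : Prop :=
  forall (U V : completeNormedModType R) (A : U -> U) (B : V -> V) (T : U -> V),
    C U V A B T <-> C U V (opp_op A) (opp_op B) T.

Definition factor_class (X : completeNormedModType R) (A : X -> X) : op_class :=
  fun U V A' B' T =>
    [/\ is_iop A', is_iop B' &
      exists (S : U -> X) (Q : X -> V),
        [/\ bounded_lin S, bounded_lin Q, (forall u, S (A' u) = A (S u)),
            (forall x, Q (A x) = B' (Q x)) & T = Q \o S]].

End Defs.

(* Main.v *)
Require Import Defs.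
From HB Require Import structures.
From mathcomp Require Import all_boot all_order all_algebra.
From mathcomp Require Import all_classical all_reals all_analysis.
From mathcomp Require Import ring lra.
Set Implicit Arguments. Unset Strict Implicit. Unset Printing Implicit Defensive.
Import Order.TTheory GRing.Theory Num.Theory.
Import numFieldNormedType.Exports.
Local Open Scope ring_scope.
Local Open Scope classical_set_scope.

Section HB.
Variable R : realType.
Variable V : normedModType R.

Definition good (G : set (V * R)) : Prop :=
  [/\ G (0, 0),
      (forall p q, G p -> G q -> G (p.1 + q.1, p.2 + q.2)),
      (forall (t : R) p, G p -> G (t *: p.1, t * p.2)) &
      (forall p, G p -> p.2 <= `|p.1|)].

Lemma good_uniq G x a b : good G -> G (x, a) -> G (x, b) -> a = b.
Proof.
move=> [G0 Gadd Gsc Gle] Ha Hb.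
have H1 := Gadd _ _ Ha (Gsc (-1) _ Hb).
have H2 := Gadd _ _ Hb (Gsc (-1) _ Ha).
move: (Gle _ H1) (Gle _ H2) => /=.
rewrite scaleN1r subrr normr0 !mulN1r !subr_le0 => h1 h2.
by apply/eqP; rewrite eq_le h1 h2.
Qed.

Lemma good_ext G y : good G -> ~ (exists a, G (y, a)) ->
  exists G', good G' /\ G `<=` G' /\ G' (y, sup [set p.2 - `|p.1 - y| | p in G]).
Proof.
move=> gG Hy; have [G0 Gadd Gsc Gle] := gG.
set L := [set p.2 - `|p.1 - y| | p in G].
set r := sup L.
have Lle : forall p q, G p -> G q -> p.2 - `|p.1 - y| <= `|q.1 + y| - q.2.
  move=> p q Gp Gq.
  have h1 := Gle _ (Gadd _ _ Gp Gq); rewrite /= in h1.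
  have h2 : `|p.1 + q.1| <= `|p.1 - y| + `|q.1 + y|.
    have -> : p.1 + q.1 = (p.1 - y) + (q.1 + y) by rewrite addrACA addNr addr0.
    exact: ler_normD.
  lra.
have L0 : L !=set0 by exists (0 - `|0 - y|); exists (0, 0).
have Lub : forall q, G q -> ubound L (`|q.1 + y| - q.2).
  by move=> q Gq _ [p Gp <-]; apply: Lle.
have rU : forall q, G q -> r <= `|q.1 + y| - q.2.
  by move=> q Gq; apply: ge_sup => //; apply: Lub.
have rL : forall p, G p -> p.2 - `|p.1 - y| <= r.
  move=> p Gp; apply: ub_le_sup; last by exists p.
  by exists (`|(0:V) + y| - 0); exact: (Lub (0,0) G0).
pose G' := [set p | exists x a t, G (x, a) /\ p = (x + t *: y, a + t * r)].
exists G'; split; last split.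
- split.
  + by exists 0, 0, 0; split => //; rewrite scale0r mul0r !addr0.
  + move=> _ _ [x [a [t [Gxa ->]]]] [x' [a' [t' [Gxa' ->]]]] /=.
    exists (x + x'), (a + a'), (t + t'); split; first exact: (Gadd _ _ Gxa Gxa').
    by rewrite scalerDl mulrDl !addrA (addrAC x (t *: y)) (addrAC a (t * r)).
  + move=> s _ [x [a [t [Gxa ->]]]] /=.
    exists (s *: x), (s * a), (s * t); split; first exact: (Gsc s _ Gxa).
    by rewrite scalerDr mulrDr scalerA mulrA.
  + move=> _ [x [a [t [Gxa ->]]]] /=.
    have [t0|t0|->] := ltgtP t 0; last by rewrite mul0r scale0r !addr0; exact: (Gle _ Gxa).
    * have tn : 0 < - t by rewrite oppr_gt0.
      have e1 : `|x + t *: y| = (-t) * `|(- t)^-1 *: x - y|.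
        rewrite -{1}(gtr0_norm tn) -(normrZ (-t)) scalerBr scalerA mulfV ?gt_eqF //.
        by rewrite scale1r scaleNr opprK.
      have e2 : (-t) * ((-t)^-1 * a) = a by rewrite mulrA mulfV ?gt_eqF // mul1r.
      have h := ler_wpM2l (ltW tn) (rL _ (Gsc ((-t)^-1) _ Gxa)).
      rewrite /= mulrBr e2 in h.
      rewrite e1; lra.
    * have e1 : `|x + t *: y| = t * `|t^-1 *: x + y|.
        rewrite -[X in _ = X * _](gtr0_norm t0) -(normrZ t) scalerDr scalerA mulfV ?gt_eqF //.
        by rewrite scale1r.
      have e2 : t * (t^-1 * a) = a by rewrite mulrA mulfV ?gt_eqF // mul1r.
      have h := ler_wpM2l (ltW t0) (rU _ (Gsc (t^-1) _ Gxa)).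
      rewrite /= mulrBr e2 in h.
      rewrite e1; lra.
- by move=> [x a] Gxa; exists x, a, 0; rewrite scale0r mul0r !addr0.
- by exists 0, 0, 1; split => //; rewrite add0r scale1r add0r mul1r.
Qed.

Lemma hahn_banach G0 : good G0 -> exists f : V -> R,
  [/\ (forall a x y, f (a *: x + y) = a * f x + f y),
      (forall x, f x <= `|x|) & (forall p, G0 p -> f p.1 = p.2)].
Proof.
move=> gG0.
pose P := fun G : set (V * R) => G = set0 \/ (good G /\ G0 `<=` G).
have PG0 : P G0 by rewrite /P; right; split.
have [A [PA Amax]] : exists A, P A /\ (forall B, A `<` B -> ~ P B).
  apply: Zorn_bigcup => F FP Ftot.
  have [[G FG Gn0]|hF] := pselect (exists2 G, F G & G !=set0); last first.
    left; apply/seteqP; split => // p [G FG Gp]; apply: hF; exists G => //.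
    by exists p.
  have gG : good G /\ G0 `<=` G.
    by case: (FP _ FG) => // e; move: Gn0; rewrite e => -[].
  right; split; last by move=> p /(proj2 gG) Gp; exists G.
  have goodF : forall H p, F H -> H p -> good H.
    by move=> H p FH Hp; case: (FP _ FH) => [e|[]//]; move: Hp; rewrite e.
  have [[G00 _ _ _] _] := gG.
  split.
  - by exists G.
  - move=> p q [G1 FG1 G1p] [G2 FG2 G2q].
    case: (Ftot _ _ FG1 FG2) => sub.
    + have [_ Gadd _ _] := goodF _ _ FG2 G2q.
      by exists G2 => //; apply: Gadd => //; apply: sub.
    + have [_ Gadd _ _] := goodF _ _ FG1 G1p.
      by exists G1 => //; apply: Gadd => //; apply: sub.
  - move=> t p [G1 FG1 G1p]; have [_ _ Gsc _] := goodF _ _ FG1 G1p.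
    by exists G1 => //; apply: Gsc.
  - move=> p [G1 FG1 G1p]; have [_ _ _ Gle] := goodF _ _ FG1 G1p.
    exact: Gle.
have [gA G0A] : good A /\ G0 `<=` A.
  case: PA => // eA; exfalso; apply: (Amax G0) => //; rewrite eA; split => //.
  move=> /(_ (0,0)) h; have [G00 _ _ _] := gG0; exact: (h G00).
have tot : forall x, exists a, A (x, a).
  move=> x; apply: contrapT => nx.
  have [G' [gG' [AG' G'y]]] := good_ext gA nx.
  apply: (Amax G'); last by right; split => //; apply: subset_trans AG'.
  split => // /(_ _ G'y) Ay; apply: nx; by eexists; exact: Ay.
have [f Hf] := choice tot.
have [A00 Aadd Asc Ale] := gA.
exists f; split.
- move=> a x y; apply: (good_uniq gA (Hf _)).
  exact: (Aadd _ _ (Asc a _ (Hf x)) (Hf y)).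
- by move=> x; exact: (Ale _ (Hf x)).
- move=> [x a] G0p /=; apply: (good_uniq gA (Hf _)); exact: G0A.
Qed.

End HB.

Section LC.
Variable R : realType.

Definition linF (U W : normedModType R) (f : U -> W) :=
  forall (a : R) (x y : U), f (a *: x + y) = a *: f x + f y.

Lemma lin_cont (U W : normedModType R) (f : U -> W) (K : R) :
  linF f -> (forall x, `|f x| <= K * `|x|) -> continuous f.
Proof.
move=> lf fK.
pose g : {linear U -> W} := HB.pack f (GRing.isLinear.Build _ _ _ _ _ lf).
apply: (@bounded_linear_continuous _ _ _ g); apply/linear_boundedP.
near=> r => x; apply: (le_trans (fK x)); apply: ler_wpM2r => //.
Unshelve. all: by end_near. Qed.

Lemma linF_sub (U W : normedModType R) (f : U -> W) (lf : linF f) x y :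
  f (x - y) = f x - f y.
Proof.
pose g : {linear U -> W} := HB.pack f (GRing.isLinear.Build _ _ _ _ _ lf).
exact: (linearB g).
Qed.
End LC.

Section Coords.
Variable R : realType.
Variable V : normedModType R.

Lemma cont_sum (U W : normedModType R) n (F : 'I_n -> U -> W) :
  (forall i, continuous (F i)) -> continuous (fun x => \sum_(i < n) F i x).
Proof.
elim: n F => [|n IH] F Fc.
  by under eq_fun do rewrite big_ord0; exact: cst_continuous.
under eq_fun do rewrite big_ord_recl.
move=> x; apply: (@continuousD _ _ _ (F ord0) (fun x => \sum_(i < n) F (lift ord0 i) x)).
  exact: Fc.
exact: (IH (fun i => F (lift ord0 i))).
Qed.

Definition spanv n (v : 'I_n -> V) (w : V) :=
  exists c : 'I_n -> R, w = \sum_(i < n) c i *: v i.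

Lemma span0 n (v : 'I_n -> V) : spanv v 0.
Proof. by exists (fun _ => 0); rewrite big1 // => i _; exact: scale0r. Qed.

Lemma spanD n (v : 'I_n -> V) a w w' :
  spanv v w -> spanv v w' -> spanv v (a *: w + w').
Proof.
move=> [c ->] [c' ->]; exists (fun i => a * c i + c' i).
rewrite scaler_sumr -big_split /=; apply: eq_bigr => i _.
by rewrite scalerDl scalerA.
Qed.

Lemma coords n (v : 'I_n -> V) : exists g : 'I_n -> V -> R,
  (forall i, linF (g i) /\ continuous (g i)) /\
  (forall w, spanv v w -> w = \sum_(i < n) g i w *: v i).
Proof.
elim: n v => [|n IH] v.
  exists (fun _ _ => 0); split.
    move=> i; split; last exact: cst_continuous.
    by move=> a x y /=; rewrite addr0 /GRing.scale /= mulr0.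
  by move=> w [c ->]; rewrite !big_ord0.
pose v' := fun i : 'I_n => v (lift ord0 i).
have [g' [g'lc g'sp]] := IH v'.
pose P := fun w => \sum_(i < n) g' i w *: v' i.
have Pc : continuous P.
  apply: cont_sum => i x; apply: continuousZr_tmp; exact: (g'lc i).2.
have spanP : forall w, spanv v' w <-> w = P w.
  by move=> w; split; [exact: g'sp | move=> ->; exists (fun i => g' i w)].
have key : exists h : V -> R, [/\ linF h, continuous h &
    forall w, spanv v w -> spanv v' (w - h w *: v ord0)].
  case: (pselect (spanv v' (v ord0))) => Hn.
  - exists (fun _ => 0); split.
    + by move=> a x y /=; rewrite addr0 /GRing.scale /= mulr0.
    + exact: cst_continuous.
    + move=> w [c ->]; rewrite scale0r subr0 big_ord_recl.
      by apply: spanD => //; exists (fun i => c (lift ord0 i)).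
  - have [rho rho0 Hrho] : exists2 rho : R, 0 < rho &
        forall m, spanv v' m -> rho <= `|v ord0 - m|.
      pose d := v ord0 - P (v ord0).
      have d0 : 0 < `|d|.
        rewrite normr_gt0 subr_eq0; apply/eqP => e; apply: Hn; exact/spanP.
      have cQ : continuous (fun z => z - P z).
        by move=> z; apply: continuousB; [exact: cvg_id | exact: Pc].
      have /cvgrPdist_lt/(_ _ d0)/nbhs_normP[rho rho0 Hb] := cQ (v ord0).
      exists rho => // m /spanP Hm; rewrite leNgt; apply/negP => lt.
      have := Hb m; rewrite /ball_ /= => /(_ lt).
      by rewrite -Hm subrr subr0 ltxx.
    pose G0 := [set p : V * R | exists m t, spanv v' m /\ p = (m + t *: v ord0, rho * t)].
    have gG0 : good G0.
      split.
      + by exists 0, 0; split; [exact: span0 | rewrite scale0r addr0 mulr0].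
      + move=> _ _ [m [t [Hm ->]]] [m' [t' [Hm' ->]]] /=.
        exists (m + m'), (t + t'); split.
          by have := spanD 1 Hm Hm'; rewrite scale1r.
        by rewrite scalerDl mulrDr addrACA.
      + move=> s _ [m [t [Hm ->]]] /=; exists (s *: m), (s * t); split.
          by have := spanD s Hm (span0 v'); rewrite addr0.
        by rewrite scalerDr scalerA mulrCA.
      + move=> _ [m [t [Hm ->]]] /=.
        have [->|t0] := eqVneq t 0; first by rewrite mulr0 scale0r addr0.
        have Hm2 : spanv v' (- t^-1 *: m).
          by have := spanD (- t^-1) Hm (span0 v'); rewrite addr0.
        have e : `|m + t *: v ord0| = `|t| * `|v ord0 - (- t^-1 *: m)|.
          rewrite -(normrZ t) scalerBr scalerA mulrN mulfV // scaleN1r opprK.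
          by rewrite addrC.
        rewrite e; apply: (@le_trans _ _ (`|t| * rho)).
          by rewrite mulrC ler_pM2r // ler_norm.
        by rewrite ler_wpM2l // Hrho.
    have [f [fl fle fG0]] := hahn_banach gG0.
    have f0 : f 0 = 0 by have := fl 1 0 0; rewrite scale1r addr0 => h; lra.
    have fN : forall x, `|f x| <= `|x|.
      move=> x; have := fl (-1) x 0; rewrite addr0 scaleN1r f0 => h.
      have := fle (- x); rewrite normrN h => h1; have := fle x => h2.
      rewrite ler_norml; apply/andP; split; lra.
    have hlin : linF (fun x => rho^-1 * f x).
      by move=> a x y; rewrite fl /GRing.scale /= mulrDr mulrCA.
    exists (fun x => rho^-1 * f x); split => //.
    + apply: (lin_cont (K := rho^-1)) => // x.
      by rewrite normrM gtr0_norm ?invr_gt0 // ler_pM2l ?invr_gt0 // fN.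
    + move=> w [c ->]; rewrite big_ord_recl.
      set m := \sum_(i < n) _.
      have Hm : spanv v' m by exists (fun i => c (lift ord0 i)).
      have := fG0 (m + c ord0 *: v ord0, rho * c ord0); rewrite /= [_ + m]addrC => ->.
        by rewrite mulrA mulVf ?gt_eqF // mul1r addrK.
      by exists m, (c ord0).
have [h [hl hc hsp]] := key.
exists (fun i x => if unlift ord0 i is Some j then g' j (x - h x *: v ord0) else h x).
split.
- move=> i; case: (unlift ord0 i) => [j|]; last by split.
  split.
  + move=> a x y; rewrite hl -(g'lc j).1; congr (g' j _).
    by rewrite scalerDl scalerBr scalerA addrACA opprD.
  + move=> x; apply: (@continuous_comp _ _ _ (fun x => x - h x *: v ord0) (g' j)).
      apply: continuousB; first exact: cvg_id.
      by apply: continuousZr_tmp; exact: hc.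
    exact: (g'lc j).2.
- move=> w Hw; rewrite big_ord_recl unlift_none.
  under eq_bigr do rewrite liftK.
  by rewrite -(g'sp _ (hsp _ Hw)) addrC subrK.
Qed.
End Coords.

Section OMT.
Variable R : realType.

Lemma linF0 (U W : normedModType R) (f : U -> W) : linF f -> f 0 = 0.
Proof. by move=> lf; have := linF_sub lf 0 0; rewrite !subrr. Qed.

Lemma linFD (U W : normedModType R) (f : U -> W) : linF f -> forall x y, f (x + y) = f x + f y.
Proof. by move=> lf x y; have := lf 1 x y; rewrite !scale1r. Qed.

Lemma linFZ (U W : normedModType R) (f : U -> W) : linF f -> forall a x, f (a *: x) = a *: f x.
Proof. by move=> lf a x; have := lf a x 0; rewrite !addr0 linF0 // addr0. Qed.

Lemma iter_bound (E : completeNormedModType R) (F : normedModType R) (f : E -> F) (M : R) :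
  linF f -> continuous f -> 0 <= M ->
  (forall y, exists x, `|x| <= M * `|y| /\ `|y - f x| <= `|y| / 2) ->
  forall y, exists x, f x = y /\ `|x| <= M * `|y| * 2.
Proof.
move=> lf fc M0 H y.
have [h Hh] := choice H.
pose fix z k := if k is k'.+1 then z k' - f (h (z k')) else y.
pose x k := h (z k).
have zb : forall k, `|z k| <= `|y| * (2^-1) ^+ k.
  elim => [|k IH] /=; first by rewrite expr0 mulr1.
  have [_ h2] := Hh (z k); apply: (le_trans h2).
  by rewrite exprSr mulrA ler_wpM2r // ?invr_ge0 ?ler0n.
have xb : forall k, `|x k| <= M * `|y| * (2^-1) ^+ k.
  move=> k; have [h1 _] := Hh (z k); apply: (le_trans h1).
  by rewrite -mulrA ler_wpM2l // zb.
have fs : forall k, f (\sum_(0 <= i < k) x i) = y - z k.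
  elim => [|k IH]; first by rewrite big_nil linF0 // subrr.
  by rewrite big_nat_recr // linFD // IH /= opprD opprK addrA.
have g0 : forall n, 0 <= geometric (M * `|y|) (2^-1) n.
  by move=> n; rewrite /= mulr_ge0 ?mulr_ge0 ?exprn_ge0 ?invr_ge0 ?ler0n.
have h12 : `|2^-1 : R| < 1 by rewrite ger0_norm ?invr_ge0 ?ler0n // invf_lt1 ?ltr1n.
have cn : cvgn (series (fun n => `|x n|)).
  apply: (series_le_cvg _ g0 _ (is_cvg_geometric_series (a := M * `|y|) h12)) => //.
have cs := normed_cvg cn.
exists (limn (series x)); split.
- have h1 := continuous_cvg _ (fc (limn (series x))) cs.
  have h2 : (f \o series x) n @[n --> \oo] --> y.
    apply/cvgrPdist_lt => e e0.
    have := @cvg_geometric _ (`|y|) _ h12; move/cvgrPdist_lt/(_ _ e0).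
    apply: filterS => n /=; rewrite sub0r normrN => hn.
    rewrite fs opprB addrC subrK; apply: le_lt_trans (zb n) _.
    by apply: le_lt_trans hn; rewrite ler_norm.
  exact: (cvg_unique (@norm_hausdorff _ F) (h1 _) h2).
- apply: (le_trans (lim_series_norm cn)).
  apply: (le_trans (lim_series_le cn (is_cvg_geometric_series (a := M * `|y|) h12) xb)).
  rewrite (cvg_lim _ (cvg_geometric_series (a := M * `|y|) h12)) //.
  by rewrite [X in X - _](splitr 1) div1r addrK invrK.
Qed.

Lemma baire_step (E F : completeNormedModType R) (f : E -> F) (g : F -> E) :
  linF f -> continuous f -> cancel g f ->
  exists M, 0 <= M /\ forall y, exists x, `|x| <= M * `|y| /\ `|y - f x| <= `|y| / 2.
Proof.
move=> lf fc gK.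
pose Bn (n : nat) := [set x : E | `|x| <= n%:R].
pose O (n : nat) := ~` closure (f @` Bn n).
have [n nd] : exists n, ~ dense (O n).
  apply: contrapT => nd.
  have all : forall n, open (O n) /\ dense (O n).
    move=> n; split; first exact/closed_openC/closed_closure.
    by apply: contrapT => dn; apply: nd; exists n.
  have [y [_ Oy]] : (setT `&` \bigcap_i O i) !=set0.
    by apply: (Baire all); [exists 0 | exact: openT].
  pose k := (Num.truncn `|g y|).+1.
  apply: (Oy k Logic.I); apply: subset_closure; exists (g y) => //.
  by rewrite /Bn /= ltW // truncnS_gt.
have [y0 [r [r0 Hr]]] : exists y0 r, 0 < r /\
    forall u, `|y0 - u| < r -> closure (f @` Bn n) u.
  apply: contrapT => H; apply: nd => O0 [y0 O0y0] oO0.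
  apply: contrapT => He.
  have /nbhs_normP [r r0 Hb] : nbhs y0 O0 by apply: open_nbhs_nbhs; split.
  apply: H; exists y0, r; split => // u yu; apply: contrapT => nc.
  by apply: He; exists u; split => //; apply: Hb.
have approx : forall u, `|y0 - u| < r -> forall e, 0 < e ->
    exists x, `|x| <= n%:R /\ `|u - f x| < e.
  move=> u yu e e0; have := Hr u yu (ball u e) (nbhsx_ballx u e e0).
  by move=> [_ [[x Bx <-] bx]]; exists x; split => //; rewrite -ball_normE in bx.
exists (4 * n%:R / r); split.
  by rewrite divr_ge0 ?mulr_ge0 ?ler0n // ltW.
move=> y; have [->|y0n] := eqVneq y 0.
  by exists 0; rewrite (linF0 lf) subr0 !normr0 mulr0 mul0r; split.
have ny : 0 < `|y| by rewrite normr_gt0.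
pose t := 2 * `|y| / r.
have t0 : 0 < t by rewrite /t divr_gt0 ?mulr_gt0.
pose u := t^-1 *: y.
have nu : `|u| = r / 2.
  rewrite /u normrZ gtr0_norm ?invr_gt0 // /t invf_div.
  by field; rewrite ?gt_eqF.
have r8 : 0 < r / 8 by rewrite divr_gt0.
have [x1 [x1n x1a]] := approx (y0 + u) (ltac:(rewrite opprD addrA subrr sub0r normrN nu; lra)) _ r8.
have [x2 [x2n x2a]] := approx y0 (ltac:(rewrite subrr normr0 //)) _ r8.
exists (t *: (x1 - x2)); split.
  rewrite normrZ gtr0_norm //.
  have : `|x1 - x2| <= n%:R + n%:R by apply: (le_trans (ler_normB _ _)); apply: lerD.
  move=> h; apply: (le_trans (ler_wpM2l (ltW t0) h)).
  rewrite /t le_eqVlt; apply/orP; left; apply/eqP; field; rewrite gt_eqF //.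
rewrite (linFZ lf) (linF_sub lf).
have ey : y = t *: u by rewrite /u scalerA mulfV ?gt_eqF // scale1r.
rewrite {1}ey -scalerBr normrZ gtr0_norm //.
have h : `|u - (f x1 - f x2)| <= `|y0 + u - f x1| + `|y0 - f x2|.
  have -> : u - (f x1 - f x2) = (y0 + u - f x1) - (y0 - f x2).
    rewrite [in RHS]opprB [y0 + u]addrC -!addrA; congr (u + _).
    by rewrite addrCA [y0 + _]addrCA subrr addr0 opprB addrC.
  exact: ler_normB.
have h2 : `|u - (f x1 - f x2)| <= r / 4 by lra.
apply: (le_trans (ler_wpM2l (ltW t0) h2)).
rewrite /t le_eqVlt; apply/orP; left; apply/eqP; field; rewrite gt_eqF //.
Qed.

Lemma bounded_inverse (E F : completeNormedModType R) (f : E -> F) (g : F -> E) :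
  linF f -> continuous f -> cancel f g -> cancel g f -> linF g /\ continuous g.
Proof.
move=> lf fc fK gK.
have lg : linF g.
  by move=> a x y; apply: (can_inj fK); rewrite lf !gK.
split => //.
have [M [M0 HM]] := baire_step lf fc gK.
apply: (lin_cont (K := M * 2)) => // y.
have [x [fx hx]] := iter_bound lf fc M0 HM y.
by rewrite -{1}fx fK mulrAC.
Qed.
End OMT.

Section PC.
Variable R : realType.
Variable X Y : completeNormedModType R.
HB.instance Definition _ := isPointed.Build (X * Y)%type (0, 0).

Lemma prod_complete (F : set_system (X * Y)%type) : ProperFilter F -> cauchy F -> cvg F.
Proof.
move=> FF /(@cauchyP R (X * Y)%type F FF) Fc.
have c1 : cvg (fst @ F).
  apply: cauchy_cvg; apply: cauchy_exP => e e0; have [x Fx] := Fc e e0.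
  exists x.1; rewrite /= nbhs_simpl /=; apply: filterS Fx => p [] //.
have c2 : cvg (snd @ F).
  apply: cauchy_cvg; apply: cauchy_exP => e e0; have [x Fx] := Fc e e0.
  exists x.2; rewrite /= nbhs_simpl /=; apply: filterS Fx => p [] //.
apply/cvg_ex; exists (lim (fst @ F), lim (snd @ F)).
have := cvg_pair c1 c2.
have -> : (fun x : X * Y => (x.1, x.2)) = id by apply: funext => -[].
move=> h; exact: h.
Qed.

HB.instance Definition _ := Uniform_isComplete.Build (X * Y)%type prod_complete.
End PC.

Section Tools.
Variable R : realType.

Lemma bl_comp (U V W : normedModType R) (f : U -> V) (g : V -> W) :
  bounded_lin f -> bounded_lin g -> bounded_lin (g \o f).
Proof.
move=> [lf cf] [lg cg]; split; first by move=> a x y /=; rewrite lf lg.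
by move=> x; apply: continuous_comp; [exact: cf | exact: cg].
Qed.

Lemma bl_id (U : normedModType R) : bounded_lin (@id U).
Proof. by split => // x; exact: cvg_id. Qed.

Lemma bl_add (U W : normedModType R) (f g : U -> W) :
  bounded_lin f -> bounded_lin g -> bounded_lin (fun x => f x + g x).
Proof.
move=> [lf cf] [lg cg]; split; last by move=> x; apply: continuousD; [exact: cf|exact: cg].
by move=> a x y; rewrite lf lg scalerDr addrACA.
Qed.

Lemma bl_sub (U W : normedModType R) (f g : U -> W) :
  bounded_lin f -> bounded_lin g -> bounded_lin (fun x => f x - g x).
Proof.
move=> [lf cf] [lg cg]; split; last by move=> x; apply: continuousB; [exact: cf|exact: cg].
by move=> a x y; rewrite lf lg scalerBr opprD addrACA.
Qed.

Lemma bl_scale (U W : normedModType R) (c : R) (f : U -> W) :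
  bounded_lin f -> bounded_lin (fun x => c *: f x).
Proof.
move=> [lf cf]; split; last by move=> x; apply: continuousZl_tmp; exact: cf.
by move=> a x y; rewrite lf scalerDr !scalerA mulrC.
Qed.

Lemma bl_rk1 (U W : normedModType R) (f : U -> R) (w : W) :
  bounded_lin f -> bounded_lin (fun x => f x *: w).
Proof.
move=> [lf cf]; split; last by move=> x; apply: continuousZr_tmp; exact: cf.
by move=> a x y; rewrite lf scalerDl -scalerA.
Qed.

Lemma bl_fst (U W : normedModType R) : bounded_lin (@fst U W).
Proof. by split => // -[x y]; exact: cvg_fst. Qed.

Lemma bl_snd (U W : normedModType R) : bounded_lin (@snd U W).
Proof. by split => // -[x y]; exact: cvg_snd. Qed.

Lemma bl_pair (U W1 W2 : normedModType R) (f : U -> W1) (g : U -> W2) :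
  bounded_lin f -> bounded_lin g -> bounded_lin (fun x => (f x, g x)).
Proof.
move=> [lf cf] [lg cg]; split; last by move=> x; apply: cvg_pair; [exact: cf|exact: cg].
by move=> a x y; rewrite lf lg.
Qed.

Lemma bl_zero (U W : normedModType R) : bounded_lin (fun _ : U => (0 : W)).
Proof. by split; [move=> a x y; rewrite scaler0 addr0 | exact: cst_continuous]. Qed.

Lemma linFN (U W : normedModType R) (f : U -> W) : linF f -> forall x, f (- x) = - f x.
Proof. by move=> lf x; have := linF_sub lf 0 x; rewrite !sub0r (linF0 lf) sub0r. Qed.

Lemma linF_sum (U W : normedModType R) (f : U -> W) n (c : 'I_n -> R) (v : 'I_n -> U) :
  linF f -> f (\sum_(i < n) c i *: v i) = \sum_(i < n) c i *: f (v i).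
Proof.
move=> lf; elim: n c v => [|n IH] c v; first by rewrite !big_ord0 (linF0 lf).
by rewrite !big_ord_recl (linFD lf) (linFZ lf) IH.
Qed.

Lemma iop_lin (X : normedModType R) (A : X -> X) : is_iop A -> linF A.
Proof. by case=> [[]]. Qed.
Lemma iop_bl (X : normedModType R) (A : X -> X) : is_iop A -> bounded_lin A.
Proof. by case. Qed.
Lemma iop_AA (X : normedModType R) (A : X -> X) : is_iop A -> forall x, A (A x) = - x.
Proof. by case. Qed.

Lemma iop_opp (X : normedModType R) (A : X -> X) : is_iop A -> is_iop (opp_op A).
Proof.
move=> iA; have [[lA cA] AA nA] := iA; split.
- have -> : opp_op A = (fun x => (-1) *: A x).
    by apply: funext => x; rewrite /opp_op scaleN1r.
  exact: bl_scale.
- by move=> x; rewrite /opp_op (linFN lA) AA !opprK.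
- move=> a b x h; rewrite /opp_op scalerN -scaleNr; apply: nA.
  by rewrite sqrrN.
Qed.

End Tools.

Section Fac.
Variable R : realType.
Variable X : completeNormedModType R.
Variable A : X -> X.
Hypothesis iA : is_iop A.

Lemma fc_member (U V : completeNormedModType R) (A' : U -> U) (B' : V -> V) (T : U -> V) :
  factor_class A A' B' T -> [/\ is_iop A', is_iop B' & cplx_op A' B' T].
Proof.
move=> [iA' iB' [S [Q [bS bQ SA QA ->]]]]; split => //; split; first exact: bl_comp.
by move=> u /=; rewrite SA QA.
Qed.

Lemma fc_zero (U V : completeNormedModType R) (A' : U -> U) (B' : V -> V) :
  is_iop A' -> is_iop B' -> factor_class A A' B' (fun _ => 0).
Proof.
move=> iA' iB'; split => //; exists (fun _ => 0), (fun _ => 0); split.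
- exact: bl_zero.
- exact: bl_zero.
- by move=> u; rewrite (linF0 (iop_lin iA)).
- by move=> x; rewrite (linF0 (iop_lin iB')).
- by [].
Qed.

Lemma fc_scale (U V : completeNormedModType R) (A' : U -> U) (B' : V -> V) (a b : R) (T : U -> V) :
  factor_class A A' B' T -> factor_class A A' B' (fun x => a *: T x + b *: B' (T x)).
Proof.
move=> [iA' iB' [S [Q [bS bQ SA QA ->]]]]; split => //.
exists S, (fun x => a *: Q x + b *: B' (Q x)); split => //.
- by apply: bl_add; apply: bl_scale => //; apply: (bl_comp bQ (iop_bl iB')).
- move=> x; have lB := iop_lin iB'.
  by rewrite QA (linFD lB) !(linFZ lB) !(iop_AA iB').
Qed.

Lemma fc_ideal (U0 U V V0 : completeNormedModType R) (A0 : U0 -> U0) (A' : U -> U)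
          (B' : V -> V) (B0 : V0 -> V0) (S0 : U0 -> U) (T : U -> V) (Q0 : V -> V0) :
  is_iop A0 -> is_iop B0 -> cplx_op A0 A' S0 -> factor_class A A' B' T ->
  cplx_op B' B0 Q0 -> factor_class A A0 B0 (Q0 \o T \o S0).
Proof.
move=> iA0 iB0 [bS0 S0A] [iA' iB' [S [Q [bS bQ SA QA ->]]]] [bQ0 Q0A].
split => //; exists (S \o S0), (Q0 \o Q); split.
- exact: bl_comp.
- exact: bl_comp.
- by move=> u /=; rewrite S0A SA.
- by move=> x /=; rewrite QA Q0A.
- by [].
Qed.

Lemma fc_sum_gen (U V : completeNormedModType R) (A' : U -> U) (B' : V -> V) n (F : 'I_n -> U -> V) :
  is_iop A' -> is_iop B' ->
  (forall T1 T2, factor_class A A' B' T1 -> factor_class A A' B' T2 ->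
     factor_class A A' B' (fun x => T1 x + T2 x)) ->
  (forall i, factor_class A A' B' (F i)) ->
  factor_class A A' B' (fun u => \sum_(i < n) F i u).
Proof.
move=> iA' iB' fadd; elim: n F => [|n IH] F FF.
  have -> : (fun u => \sum_(i < 0) F i u) = (fun _ => 0) by apply: funext => u; rewrite big_ord0.
  exact: fc_zero.
have -> : (fun u => \sum_(i < n.+1) F i u) =
    (fun u => F ord0 u + \sum_(i < n) F (lift ord0 i) u).
  by apply: funext => u; rewrite big_ord_recl.
apply: fadd => //; exact: (IH (fun i => F (lift ord0 i))).
Qed.

Section Rank1.
Variables (x0 : X) (g0 : X -> R).
Hypotheses (bg0 : bounded_lin g0) (g0x0 : g0 x0 = 1) (g0Ax0 : g0 (A x0) = 0).

Lemma g0_comb (s t : R) : g0 (s *: x0 - t *: A x0) = s.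
Proof.
have lg := bg0.1.
rewrite (linF_sub lg) !(linFZ lg) g0x0 g0Ax0.
by rewrite /GRing.scale /= mulr1 mulr0 subr0.
Qed.

Lemma fc_rank1 (U V : completeNormedModType R) (A' : U -> U) (B' : V -> V) (f : U -> R) (v : V) :
  is_iop A' -> is_iop B' -> bounded_lin f ->
  factor_class A A' B' (fun u => f u *: v - f (A' u) *: B' v).
Proof.
move=> iA' iB' bf; split => //.
have lf := bf.1; have lA := iop_lin iA; have lA' := iop_lin iA'; have lB := iop_lin iB'.
have SA : forall u, f (A' u) *: x0 - f (A' (A' u)) *: A x0 = A (f u *: x0 - f (A' u) *: A x0).
  move=> u; rewrite (iop_AA iA') (linFN lf) (linF_sub lA) !(linFZ lA) (iop_AA iA).
  by rewrite scaleNr scalerN !opprK addrC.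
exists (fun u => f u *: x0 - f (A' u) *: A x0), (fun x => g0 x *: v - g0 (A x) *: B' v); split.
- apply: bl_sub; apply: bl_rk1 => //; exact: bl_comp (iop_bl iA') bf.
- apply: bl_sub; apply: bl_rk1 => //; exact: bl_comp (iop_bl iA) bg0.
- exact: SA.
- move=> x; rewrite (iop_AA iA) (linFN bg0.1) (linF_sub lB) !(linFZ lB) (iop_AA iB').
  by rewrite scaleNr scalerN !opprK addrC.
- apply: funext => u /=; rewrite -SA !g0_comb.
  done.
Qed.
End Rank1.

End Fac.

Section FacJ.
Variable R : realType.
Variable X : completeNormedModType R.
Variable A : X -> X.
Hypothesis iA : is_iop A.
Variables (J : X -> X * X) (K : X * X -> X).
Hypotheses (bJ : bounded_lin J) (JA : forall x, J (A x) = op_sum A (J x))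
  (JK : cancel J K) (KJ : cancel K J) (bK : bounded_lin K).

Lemma KA p : K (op_sum A p) = A (K p).
Proof. by apply: (can_inj JK); rewrite KJ JA KJ. Qed.

Lemma fc_add (U V : completeNormedModType R) (A' : U -> U) (B' : V -> V) (T1 T2 : U -> V) :
  factor_class A A' B' T1 -> factor_class A A' B' T2 ->
  factor_class A A' B' (fun x => T1 x + T2 x).
Proof.
move=> [iA' iB' [S1 [Q1 [bS1 bQ1 SA1 QA1 ->]]]] [_ _ [S2 [Q2 [bS2 bQ2 SA2 QA2 ->]]]].
split => //; exists (fun u => K (S1 u, S2 u)), (fun x => Q1 (J x).1 + Q2 (J x).2); split.
- exact: (bl_comp (bl_pair bS1 bS2) bK).
- apply: bl_add.
    exact: (bl_comp (bl_comp bJ (@bl_fst _ X X)) bQ1).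
  exact: (bl_comp (bl_comp bJ (@bl_snd _ X X)) bQ2).
- by move=> u; rewrite SA1 SA2; exact: (KA (S1 u, S2 u)).
- by move=> x; rewrite JA /= QA1 QA2 (linFD (iop_lin iB')).
- by apply: funext => u /=; rewrite KJ.
Qed.

Lemma fc_finrank (U V : completeNormedModType R) (A' : U -> U) (B' : V -> V) (T : U -> V)
  (x0 : X) (g0 : X -> R) :
  bounded_lin g0 -> g0 x0 = 1 -> g0 (A x0) = 0 ->
  is_iop A' -> is_iop B' -> cplx_op A' B' T -> finite_rank T -> factor_class A A' B' T.
Proof.
move=> bg0 g0x0 g0Ax0 iA' iB' [bT TA] [n [v Hv]].
have [g [glc gsp]] := coords v.
pose f i u := g i (T u).
have bf : forall i, bounded_lin (f i).
  move=> i; exact: (bl_comp bT (glc i)).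
have Tsum : forall u, T u = \sum_(i < n) f i u *: v i.
  by move=> u; apply: gsp; exact: Hv.
pose Rk i u := f i u *: v i - f i (A' u) *: B' (v i).
have fRk : forall i, factor_class A A' B' (Rk i).
  by move=> i; apply: (fc_rank1 iA bg0 g0x0 g0Ax0).
have fsum := fc_sum_gen iA iA' iB' (@fc_add U V A' B') fRk.
have eqT : T = (fun u => 2^-1 *: (\sum_(i < n) Rk i u) + 0 *: B' (\sum_(i < n) Rk i u)).
  apply: funext => u; rewrite scale0r addr0.
  have -> : \sum_(i < n) Rk i u = T u + T u.
    rewrite /Rk sumrB -Tsum -(linF_sum _ _ (iop_lin iB')) -Tsum TA (iop_AA iB').
    by rewrite opprK.
  have h2 : (2^-1 : R) + 2^-1 = 1 by lra.
  by rewrite scalerDr -scalerDl h2 scale1r.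
rewrite eqT; exact: fc_scale.
Qed.

End FacJ.

Section Pel.
Variable R : realType.
Variable X : completeNormedModType R.
Variable A : X -> X.
Hypothesis iA : is_iop A.
Variables (J : X -> X * X) (K : X * X -> X).
Hypotheses (bJ : bounded_lin J) (JA : forall x, J (A x) = op_sum A (J x))
  (JK : cancel J K) (KJ : cancel K J) (bK : bounded_lin K).
Variables (S Q : X -> X).
Hypotheses (bS : bounded_lin S) (bQ : bounded_lin Q)
  (SA0 : forall u, S (opp_op A u) = A (S u)) (QA0 : forall x, Q (A x) = opp_op A (Q x))
  (QS : forall x, Q (S x) = x).

Lemma pelczynski : cplx_iso A (opp_op A).
Proof.
have lA := iop_lin iA; have lS := bS.1; have lQ := bQ.1; have lJ := bJ.1; have lK := bK.1.
have SA : forall y, S (A y) = - A (S y).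
  move=> y; have := SA0 (- y); rewrite /opp_op (linFN lA) opprK => ->.
  by rewrite (linFN lS) (linFN lA).
have QA : forall x, Q (A x) = - A (Q x) by move=> x; rewrite QA0.
have KA' := KA JA JK KJ.
pose al x := ((J (Q x)).1, S (J (Q x)).2 + (x - S (Q x))).
pose be (p : X * X) := S (K (p.1, Q p.2)) + (p.2 - S (Q p.2)).
pose T x := be ((al x).2, (al x).1).
have beal : forall x, be (al x) = x.
  move=> x; rewrite /be /al /=.
  rewrite (linFD lQ) (linF_sub lQ) !QS subrr addr0 -surjective_pairing JK.
  by rewrite [S (J (Q x)).2 + _]addrC addrK addrC subrK.
have albe : forall p, al (be p) = p.
  move=> [c d]; rewrite /be /al /=.
  rewrite (linFD lQ) (linF_sub lQ) !QS subrr addr0 KJ /=.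
  by rewrite [S (K _) + _]addrC addrK addrC subrK.
have TT : forall x, T (T x) = x.
  by move=> x; rewrite /T albe /=; exact: beal.
have alA : forall x, al (A x) = (- A (al x).1, A (al x).2).
  move=> x; rewrite /al QA (linFN lJ) JA /=; congr (_, _).
  by rewrite !(linFN lS) !SA !opprK (linFD lA) (linF_sub lA).
have beA : forall c d, be (A c, - A d) = - A (be (c, d)).
  move=> c d; rewrite /be /= (linFN lQ) QA opprK.
  rewrite (KA' (c, Q d)) SA (linFD lA) (linF_sub lA) SA.
  by rewrite opprD opprB opprK [- A d + _]addrC.
exists T; split; last by exists T.
split.
- have bal : bounded_lin al.
    apply: bl_pair; first exact: (bl_comp (bl_comp bQ bJ) (@bl_fst _ X X)).
    apply: bl_add; first exact: (bl_comp (bl_comp (bl_comp bQ bJ) (@bl_snd _ X X)) bS).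
    by apply: bl_sub; [exact: bl_id | exact: bl_comp bQ bS].
  have bbe : bounded_lin be.
    apply: bl_add.
      exact: (bl_comp (bl_pair (@bl_fst _ X X) (bl_comp (@bl_snd _ X X) bQ)) (bl_comp bK bS)).
    apply: bl_sub; first exact: (@bl_snd _ X X).
    exact: (bl_comp (@bl_snd _ X X) (bl_comp bQ bS)).
  exact: (bl_comp (bl_comp bal (bl_pair (@bl_snd _ X X) (@bl_fst _ X X))) bbe).
- move=> x; rewrite /T alA /=; exact: beA.
Qed.

End Pel.

Theorem proposition6 (R : realType) (X : completeNormedModType R) (A : X -> X) :
  is_iop A ->
  ~ cplx_iso A (opp_op A) ->
  cplx_iso A (op_sum A) ->
  is_cplx_op_ideal (factor_class A) /\ ~ self_conjugate (factor_class A).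
Proof.
move=> iA niso [J [[bJ JA] [K JK KJ]]].
have [lK cK] := bounded_inverse bJ.1 bJ.2 JK KJ.
have bK : bounded_lin K by split.
have lA := iop_lin iA.
have [x0 x0n] : exists x0 : X, x0 != 0.
  apply: contrapT => h.
  have z : forall x : X, x = 0.
    by move=> x; apply: contrapT => hx; apply: h; exists x; apply/eqP.
  apply: niso; exists id; split; last by exists id.
  split; first exact: bl_id.
  by move=> x; rewrite [LHS]z [RHS]z.
pose G0 := [set p : X * R | exists t : R, p = (t *: x0, t * `|x0|)].
have gG0 : good G0.
  split.
  - by exists 0; rewrite scale0r mul0r.
  - move=> _ _ [t ->] [s ->] /=; exists (t + s); by rewrite scalerDl mulrDl.
  - move=> s _ [t ->] /=; exists (s * t); by rewrite scalerA mulrA.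
  - move=> _ [t ->] /=; rewrite normrZ ler_wpM2r //; exact: ler_norm.
have [f0 [lf0 f0le f0G]] := hahn_banach gG0.
have f0x0 : f0 x0 = `|x0| by apply: (f0G (x0, `|x0|)); exists 1; rewrite scale1r mul1r.
have f00 : f0 0 = 0 by have := lf0 1 0 0; rewrite scale1r addr0 => h; lra.
have f0N : forall x, f0 (- x) = - f0 x.
  by move=> x; have := lf0 (-1) x 0; rewrite addr0 scaleN1r f00 => h; lra.
have linf0 : linF f0 by move=> a x y; rewrite lf0.
have bf0 : bounded_lin f0.
  split => //; apply: (lin_cont (K := 1)) => // x.
  have := f0le (- x); rewrite normrN f0N => h1; have := f0le x => h2.
  rewrite mul1r ler_norml; apply/andP; split; lra.
pose al := `|x0|; pose be := f0 (A x0).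
have al0 : 0 < al by rewrite normr_gt0.
pose D := al ^+ 2 + be ^+ 2.
have D0 : 0 < D by rewrite /D ltr_pwDl ?sqr_ge0 ?exprn_gt0.
pose g0 x := D^-1 *: (al *: f0 x + be *: f0 (A x)).
have bg0 : bounded_lin g0.
  apply: bl_scale; apply: bl_add; apply: bl_scale => //.
  exact: (bl_comp (iop_bl iA) bf0).
have g0x0 : g0 x0 = 1.
  rewrite /g0 f0x0 -/al -/be /GRing.scale /=.
  by rewrite -!expr2 -/D mulVf ?gt_eqF.
have g0Ax0 : g0 (A x0) = 0.
  rewrite /g0 (iop_AA iA) f0N f0x0 -/al -/be /GRing.scale /=.
  by rewrite mulrN [be * al]mulrC subrr mulr0.
split.
- split; [|split; [|split]].
  + by move=> U V A' B' T; exact: fc_member.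
  + move=> U V A' B' iA' iB'; split.
    * exact: fc_zero.
    * by move=> T1 T2; apply: (fc_add bJ JA JK KJ bK).
    * by move=> a b T; exact: fc_scale.
  + move=> U V A' B' T iA' iB' cT fT.
    exact: (fc_finrank iA bJ JA JK KJ bK bg0 g0x0 g0Ax0 iA' iB' cT fT).
  + move=> U0 U V V0 A0 A' B' B0 S T Q iA0 iB0 cS fT cQ.
    exact: fc_ideal cS fT cQ.
- move=> sc.
  have fid : factor_class A A A (@id X).
    split => //; exists id, id; split => //; exact: bl_id.
  have := (sc X X A A id).1 fid.
  move=> [_ _ [S [Q [bS bQ SA QA eq]]]].
  apply: niso; apply: (pelczynski iA bJ JA JK KJ bK bS bQ SA QA).
  by move=> x; have := congr1 (fun h => h x) eq.
Qed.
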